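(* Let $\Omega\subset\mathbb{R}^d$ be a bounded open set, $q\ge1$ an integer, $\lambda\in\mathbb{R}\setminus\{0\}$, $k\in C^q(\overline{\Omega}\times\overline{\Omega})$ and $f\in C^q(\overline{\Omega})$ nonzero. Suppose $\lambda$ does not belong to the spectrum of $\mathcal{K}\colon C^0(\overline{\Omega})\to C^0(\overline{\Omega})$, $(\mathcal{K}v)(x)=\int_\Omega k(x,y)v(y)\,dy$, and let $u\in C^q(\overline{\Omega})$ be the solution of $\lambda u-\mathcal{K}u=f$. Let $\{(Y_h,\vec w_h)\}_{h>0}$ be a quadrature scheme of order $q$ which is stable. Then for all sufficiently small $h>0$ the linear system \[ \lambda\hat u_{h,i}-\sum_{j=1}^{|Y_h|}w_{h,j}k(y_{h,i},y_{h,j})\hat u_{h,j}=f(y_{h,i}),\quad i=1,\dots,|Y_h|, \] has a unique solution, the condition number of its system matrix $\lambda I_h-K_hW_h$ is bounded uniformly with respect to $h$, and there is a constant $C>0$ independent of $h$ and $u$ such that \[ \|u-u_h\|_\infty\le C h^q\|u\|_{C^q(\overline{\Omega})},\qquad\text{where } u_h(x)=\frac1\lambda\Big(\sum_{i=1}^{|Y_h|}w_{h,i}k(x,y_{h,i})\hat u_{h,i}+f(x)\Big). \]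
   Context: $C^q(\overline{\Omega})$ is the space of functions whose partial derivatives up to order $q$ exist on $\Omega$ and extend continuously to $\overline{\Omega}$, with norm $\|v\|_{C^q(\overline{\Omega})}=\sum_{|\alpha|\le q}\frac1{\alpha!}\max_{\overline\Omega}|\partial^\alpha v|$; $\|v\|_\infty=\max_{\overline\Omega}|v|$. A quadrature scheme is a family $\{(Y_h,\vec w_h)\}_{h>0}$ of finite sets $Y_h=\{y_{h,i}\}\subset\overline{\Omega}$ and weights $\vec w_h\in\mathbb{R}^{|Y_h|}$ with $|Y_h|\to\infty$ as $h\to0^+$. It has order $q$ if there is $C_w$ with $|\int_\Omega v-\sum_i w_{h,i}v(y_{h,i})|\le C_wh^q\|v\|_{C^q(\overline{\Omega})}$ for all $h>0$ and $v\in C^q(\overline{\Omega})$; it is stable if $\|\vec w_h\|_1\le C_Q$ for all $h>0$. $I_h$ is the identity of size $|Y_h|$, $(K_h)_{ij}=k(y_{h,i},y_{h,j})$, $W_h=\mathrm{diag}(\vec w_h)$. *)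

(* Defs.v *)
From HB Require Import structures.
From mathcomp Require Import all_boot all_order all_algebra.
From mathcomp Require Import all_classical all_reals all_analysis.
Set Implicit Arguments. Unset Strict Implicit. Unset Printing Implicit Defensive.
Import Order.TTheory GRing.Theory Num.Theory.
Import numFieldNormedType.Exports.
Local Open Scope classical_set_scope.
Local Open Scope ring_scope.

Section Defs.
Variable R : realType.

Definition pdiff (n : nat) (i : 'I_n) (f : 'rV[R]_n -> R) : 'rV[R]_n -> R :=
  fun x => 'D_(delta_mx 0 i) f x.

Definition Dseq (n : nat) (s : seq 'I_n) (f : 'rV[R]_n -> R) : 'rV[R]_n -> R :=
  foldr (@pdiff n) f s.

(* multi-indices alpha with entries <= q ; alpha is admissible if |alpha| <= q *)
Definition mindex (n q : nat) := {ffun 'I_n -> 'I_q.+1}.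
Definition mabs (n q : nat) (a : mindex n q) : nat := (\sum_(i < n) (a i : nat))%N.
Definition mfact (n q : nat) (a : mindex n q) : nat := (\prod_(i < n) (a i)`!)%N.
Definition mseq (n q : nat) (a : mindex n q) : seq 'I_n :=
  flatten [seq nseq (a i) i | i <- enum 'I_n].
Definition pderiv (n q : nat) (a : mindex n q) (f : 'rV[R]_n -> R) := Dseq (mseq a) f.

(* v is in C^q(closure A): v is continuous on closure A, all partial
   derivatives of order <= q exist on A and extend continuously to closure A. *)
Definition Cq (n q : nat) (A : set 'rV[R]_n) (v : 'rV[R]_n -> R) : Prop :=
  {within closure A, continuous v} /\
  (forall s : seq 'I_n, (size s < q)%N -> forall (i : 'I_n) x, A x ->
      derivable (Dseq s v) x (delta_mx 0 i)) /\
  (forall s : seq 'I_n, (size s <= q)%N -> exists g : 'rV[R]_n -> R,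
      {within closure A, continuous g} /\ forall x, A x -> g x = Dseq s v x).

(* ||v||_{C^q}: sum over |alpha| <= q of (1/alpha!) max_{closure A} |d^alpha v|.
   The max over closure A of the continuous extension equals the sup over A. *)
Definition Cq_norm (n q : nat) (A : set 'rV[R]_n) (v : 'rV[R]_n -> R) : R :=
  \sum_(a : mindex n q | (mabs a <= q)%N)
     ((mfact a)%:R^-1 * sup [set `|pderiv a v x| | x in A]).

Definition supnorm (n : nat) (A : set 'rV[R]_n) (v : 'rV[R]_n -> R) : R :=
  sup [set `|v x| | x in closure A].

Fixpoint iint (n : nat) : ('rV[R]_n -> R) -> R :=
  match n return ('rV[R]_n -> R) -> R with
  | 0 => fun f => f 0
  | n'.+1 => fun f =>
      Rintegral (@lebesgue_measure R) setT
        (fun t : R => iint (fun x : 'rV[R]_n' => f (row_mx (t%:M : 'rV[R]_1) x)))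
  end.

Definition integral_on (n : nat) (A : set 'rV[R]_n) (g : 'rV[R]_n -> R) : R :=
  iint (fun y => \1_A y * g y).

Definition Kop (d : nat) (Om : set 'rV[R]_d) (k : 'rV[R]_d -> 'rV[R]_d -> R)
  (v : 'rV[R]_d -> R) : 'rV[R]_d -> R :=
  fun x => integral_on Om (fun y => k x y * v y).

Definition prodset (d : nat) (Om : set 'rV[R]_d) : set 'rV[R]_(d + d) :=
  [set z | Om (lsubmx z) /\ Om (rsubmx z)].
Definition kfun2 (d : nat) (k : 'rV[R]_d -> 'rV[R]_d -> R) : 'rV[R]_(d + d) -> R :=
  fun z => k (lsubmx z) (rsubmx z).

(* lam is NOT in the spectrum of K : C^0(closure Om) -> C^0(closure Om), i.e.
   lam I - K is a bijection of C^0(closure Om) with bounded inverse. *)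
Definition not_in_spectrum (d : nat) (Om : set 'rV[R]_d)
  (k : 'rV[R]_d -> 'rV[R]_d -> R) (lam : R) : Prop :=
  (forall g, {within closure Om, continuous g} ->
     exists v, {within closure Om, continuous v} /\
       forall x, closure Om x -> lam * v x - Kop Om k v x = g x) /\
  (forall v, {within closure Om, continuous v} ->
     (forall x, closure Om x -> lam * v x - Kop Om k v x = 0) ->
     forall x, closure Om x -> v x = 0) /\
  (exists M : R, forall v, {within closure Om, continuous v} ->
     supnorm Om v <= M * supnorm Om (fun x => lam * v x - Kop Om k v x)).

(* For h > 0: nodes y h i (i < N h), forming the finite set Y_h of
   cardinality N h (the nodes are pairwise distinct), and weights w h i. *)
Definition quad_scheme (d : nat) (Om : set 'rV[R]_d) (N : R -> nat)
  (y : forall h : R, 'I_(N h) -> 'rV[R]_d) : Prop :=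
  (forall h, 0 < h -> forall i, closure Om (y h i)) /\
  (forall h, 0 < h -> injective (y h)) /\
  (forall M : nat, exists delta : R, 0 < delta /\
      forall h, 0 < h < delta -> (M <= N h)%N).

Definition quad_order (d : nat) (Om : set 'rV[R]_d) (q : nat) (N : R -> nat)
  (y : forall h : R, 'I_(N h) -> 'rV[R]_d) (w : forall h : R, 'I_(N h) -> R) : Prop :=
  exists Cw : R, forall h, 0 < h -> forall v, Cq q Om v ->
    `|integral_on Om v - \sum_(i < N h) w h i * v (y h i)|
      <= Cw * h ^+ q * Cq_norm q Om v.

Definition quad_stable (N : R -> nat) (w : forall h : R, 'I_(N h) -> R) : Prop :=
  exists CQ : R, forall h, 0 < h -> \sum_(i < N h) `|w h i| <= CQ.

Definition mxnorm_inf (m : nat) (A : 'M[R]_m) : R :=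
  \big[Num.max/0]_(i < m) \sum_(j < m) `|A i j|.
Definition cond_inf (m : nat) (A : 'M[R]_m) : R :=
  mxnorm_inf A * mxnorm_inf (invmx A).

Definition sysmx (d : nat) (k : 'rV[R]_d -> 'rV[R]_d -> R) (lam : R) (N : R -> nat)
  (y : forall h : R, 'I_(N h) -> 'rV[R]_d) (w : forall h : R, 'I_(N h) -> R)
  (h : R) : 'M[R]_(N h) :=
  lam%:M - (\matrix_(i, j) k (y h i) (y h j)) *m diag_mx (\row_j w h j).

Definition nystrom (d : nat) (k : 'rV[R]_d -> 'rV[R]_d -> R) (lam : R) (N : R -> nat)
  (y : forall h : R, 'I_(N h) -> 'rV[R]_d) (w : forall h : R, 'I_(N h) -> R)
  (f : 'rV[R]_d -> R) (h : R) (uh : 'I_(N h) -> R) : 'rV[R]_d -> R :=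
  fun x => lam^-1 * (\sum_(i < N h) w h i * k x (y h i) * uh i + f x).

End Defs.

(* Main.v *)
Require Import Defs.
From HB Require Import structures.
From mathcomp Require Import all_boot all_order all_algebra.
From mathcomp Require Import all_classical all_reals all_analysis.
Import Order.TTheory GRing.Theory Num.Theory.
Import numFieldNormedType.Exports.
Local Open Scope classical_set_scope.
Local Open Scope ring_scope.
From mathcomp Require Import ring lra.

Set Implicit Arguments. Unset Strict Implicit. Unset Printing Implicit Defensive.

Fixpoint masks (n : nat) : seq bitseq :=
  if n is n'.+1 then map (cons true) (masks n') ++ map (cons false) (masks n')
  else [:: [::]].

Section Gen.
Context {R : realType}.

Lemma wc_add (T : topologicalType) (B : set T) (f g : T -> R) :
  {within B, continuous f} -> {within B, continuous g} ->
  {within B, continuous (fun z => f z + g z)}.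
Proof. by move=> Hf Hg x; exact: (continuousD (Hf x) (Hg x)). Qed.

Lemma wc_mul (T : topologicalType) (B : set T) (f g : T -> R) :
  {within B, continuous f} -> {within B, continuous g} ->
  {within B, continuous (fun z => f z * g z)}.
Proof. by move=> Hf Hg x; exact: (continuousM (Hf x) (Hg x)). Qed.

Lemma wc_cst (T : topologicalType) (B : set T) (c : R) :
  {within B, continuous (fun _ : T => c)}.
Proof. by move=> x; exact: cvg_cst. Qed.

Lemma wc_lsum (T : topologicalType) (I : Type) (l : seq I) (B : set T) (F : I -> T -> R) :
  (forall m, {within B, continuous (F m)}) ->
  {within B, continuous (fun z => \sum_(m <- l) F m z)}.
Proof.
move=> H; elim: l => [|a l IH].
  have -> : (fun z => \sum_(m <- [::]) F m z) = (fun _ => 0).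
    by apply/funext => z; rewrite big_nil.
  exact: wc_cst.
have -> : (fun z => \sum_(m <- a :: l) F m z) = (fun z => F a z + \sum_(m <- l) F m z).
  by apply/funext => z; rewrite big_cons.
exact: wc_add.
Qed.

Lemma is_derive_lsum (V : normedModType R) (I : Type) (l : seq I) (F : I -> V -> R)
  (dF : I -> R) x v :
  (forall m, is_derive x v (F m) (dF m)) ->
  is_derive x v (fun z => \sum_(m <- l) F m z) (\sum_(m <- l) dF m).
Proof.
move=> H; elim: l => [|a l IH].
  have -> : (fun z => \sum_(m <- [::]) F m z) = cst 0.
    by apply/funext => z; rewrite big_nil.
  rewrite big_nil; exact: is_derive_cst.
have -> : (fun z => \sum_(m <- a :: l) F m z) = F a + (fun z => \sum_(m <- l) F m z).
  by apply/funext => z; rewrite big_cons.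
rewrite big_cons; exact: (is_deriveD (H a) IH).
Qed.

Section T.

Context (n q : nat) (A : set 'rV[R]_n).
Hypothesis Aop : open A.


Lemma size_mask_le (T : Type) (m : bitseq) (s : seq T) : (size (mask m s) <= size s)%N.
Proof.
elim: s m => [|a s IH] [|b m] //=; case: b => //=; first by rewrite ltnS.
exact: leqW.
Qed.

Lemma test x : A x -> \forall z \near x, A z.
Proof. move=> Ax; exact: Aop. Qed.

Lemma Dseq_mul (f g : 'rV[R]_n -> R) :
  (forall t, (size t < q)%N -> forall i x, A x -> derivable (Dseq t f) x (delta_mx 0 i)) ->
  (forall t, (size t < q)%N -> forall i x, A x -> derivable (Dseq t g) x (delta_mx 0 i)) ->
  forall s, (size s <= q)%N -> forall x, A x ->
  Dseq s (fun z => f z * g z) x =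
  \sum_(m <- masks (size s)) Dseq (mask m s) f x * Dseq (mask (map negb m) s) g x.
Proof.
move=> Hf Hg; elim=> [|i s IH] Hs x Ax.
  by rewrite /= big_cons big_nil addr0.
have Hs' : (size s < q)%N by [].
have Hn : {near x, Dseq s (fun z => f z * g z) =1
   (fun z => \sum_(m <- masks (size s)) Dseq (mask m s) f z * Dseq (mask (map negb m) s) g z)}.
  by near=> z; apply: IH => //; [exact: ltnW|near: z; exact: Aop].
have Hd : is_derive x (delta_mx 0 i)
   (fun z => \sum_(m <- masks (size s)) Dseq (mask m s) f z * Dseq (mask (map negb m) s) g z)
   (\sum_(m <- masks (size s))
      (Dseq (mask m s) f x * 'D_(delta_mx 0 i) (Dseq (mask (map negb m) s) g) x +
       Dseq (mask (map negb m) s) g x * 'D_(delta_mx 0 i) (Dseq (mask m s) f) x)).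
  apply: is_derive_lsum => m.
  have d1 := derivableP (Hf _ (leq_ltn_trans (size_mask_le m s) Hs') i x Ax).
  have d2 := derivableP (Hg _ (leq_ltn_trans (size_mask_le (map negb m) s) Hs') i x Ax).
  rewrite /=; have -> : (fun z => Dseq (mask m s) f z * Dseq (mask (map negb m) s) g z) =
    Dseq (mask m s) f * Dseq (mask (map negb m) s) g by [].
  exact: (is_deriveM d1 d2).
rewrite /= {1}/pdiff (near_eq_derive _ Hn) (@derive_val _ _ _ _ _ _ _ Hd).
rewrite big_cat /= !big_map /= big_split /= addrC; congr (_ + _).
  by apply: eq_bigr => m _; rewrite mulrC.
Unshelve. all: by end_near.
Qed.


End T.
End Gen.

Set Implicit Arguments. Unset Strict Implicit. Unset Printing Implicit Defensive.

Section CqFsec.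
Context {R : realType} (n q : nat) (A : set 'rV[R]_n).
Hypothesis Aop : open A.

Definition CqF (v : 'rV[R]_n -> R) (D : seq 'I_n -> 'rV[R]_n -> R) :=
  [/\ {within closure A, continuous v},
      (forall s, (size s <= q)%N -> {within closure A, continuous (D s)}),
      (forall s, (size s <= q)%N -> forall x, A x -> Dseq s v x = D s x) &
      (forall s, (size s < q)%N -> forall i x, A x -> derivable (Dseq s v) x (delta_mx 0 i))].

Lemma CqF_Cq v D : CqF v D -> Cq q A v.
Proof.
case=> H1 H2 H3 H4; split => //; split => // s Hs; exists (D s); split; first exact: H2.
by move=> x Ax; rewrite H3.
Qed.

Lemma Dseq_mul_der (f g : 'rV[R]_n -> R) :
  (forall t, (size t < q)%N -> forall i x, A x -> derivable (Dseq t f) x (delta_mx 0 i)) ->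
  (forall t, (size t < q)%N -> forall i x, A x -> derivable (Dseq t g) x (delta_mx 0 i)) ->
  forall s, (size s < q)%N -> forall i x, A x ->
  derivable (Dseq s (fun z => f z * g z)) x (delta_mx 0 i).
Proof.
move=> Hf Hg s Hs i x Ax.
have Hn : {near x, (fun z => \sum_(m <- masks (size s)) Dseq (mask m s) f z * Dseq (mask (map negb m) s) g z)
   =1 Dseq s (fun z => f z * g z)}.
  near=> z; rewrite (Dseq_mul Aop Hf Hg) //; [exact: ltnW|near: z; exact: Aop].
apply: (near_eq_derivable Hn).
have Hd : is_derive x (delta_mx 0 i)
   (fun z => \sum_(m <- masks (size s)) Dseq (mask m s) f z * Dseq (mask (map negb m) s) g z)
   (\sum_(m <- masks (size s))
      (Dseq (mask m s) f x * 'D_(delta_mx 0 i) (Dseq (mask (map negb m) s) g) x +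
       Dseq (mask (map negb m) s) g x * 'D_(delta_mx 0 i) (Dseq (mask m s) f) x)).
  apply: is_derive_lsum => m.
  have d1 := derivableP (Hf _ (leq_ltn_trans (size_mask_le m s) Hs) i x Ax).
  have d2 := derivableP (Hg _ (leq_ltn_trans (size_mask_le (map negb m) s) Hs) i x Ax).
  rewrite /=; have -> : (fun z => Dseq (mask m s) f z * Dseq (mask (map negb m) s) g z) =
    Dseq (mask m s) f * Dseq (mask (map negb m) s) g by [].
  exact: (is_deriveM d1 d2).
exact: (@ex_derive _ _ _ _ _ _ _ Hd).
Unshelve. all: by end_near.
Qed.

Definition Dmul (Df Dg : seq 'I_n -> 'rV[R]_n -> R) (s : seq 'I_n) (z : 'rV[R]_n) :=
  \sum_(m <- masks (size s)) Df (mask m s) z * Dg (mask (map negb m) s) z.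

Lemma CqF_mul f g Df Dg : CqF f Df -> CqF g Dg ->
  CqF (fun z => f z * g z) (Dmul Df Dg).
Proof.
case=> f1 f2 f3 f4 [g1 g2 g3 g4]; split.
- exact: wc_mul.
- move=> s Hs; apply: wc_lsum => m; apply: wc_mul.
    by apply: f2; apply: leq_trans (size_mask_le _ _) Hs.
  by apply: g2; apply: leq_trans (size_mask_le _ _) Hs.
- move=> s Hs x Ax; rewrite (Dseq_mul Aop f4 g4) // /Dmul.
  apply: eq_bigr => m _; rewrite f3 ?g3 //; apply: leq_trans (size_mask_le _ _) Hs.
- exact: Dseq_mul_der.
Qed.

Lemma Dseq_sum N (c : 'I_N -> R) (F : 'I_N -> 'rV[R]_n -> R) :
  (forall j t, (size t < q)%N -> forall i x, A x -> derivable (Dseq t (F j)) x (delta_mx 0 i)) ->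
  forall s, (size s <= q)%N -> forall x, A x ->
  Dseq s (fun z => \sum_(j < N) c j * F j z) x = \sum_(j < N) c j * Dseq s (F j) x.
Proof.
move=> HF; elim=> [|i s IH] Hs x Ax; first by [].
have Hs' : (size s < q)%N by [].
have Hn : {near x, Dseq s (fun z => \sum_(j < N) c j * F j z) =1
   (fun z => \sum_(j < N) c j * Dseq s (F j) z)}.
  by near=> z; apply: IH => //; [exact: ltnW|near: z; exact: Aop].
have Hd : is_derive x (delta_mx 0 i) (fun z => \sum_(j < N) c j * Dseq s (F j) z)
   (\sum_(j < N) c j * 'D_(delta_mx 0 i) (Dseq s (F j)) x).
  apply: is_derive_lsum => j.
  have d1 := derivableP (HF j _ Hs' i x Ax).
  rewrite /=; have -> : (fun z => c j * Dseq s (F j) z) = c j *: Dseq s (F j) by [].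
  exact: (is_deriveZ (c j) d1).
by rewrite /= {1}/pdiff (near_eq_derive _ Hn) (@derive_val _ _ _ _ _ _ _ Hd).
Unshelve. all: by end_near.
Qed.

Lemma Dseq_sum_der N (c : 'I_N -> R) (F : 'I_N -> 'rV[R]_n -> R) :
  (forall j t, (size t < q)%N -> forall i x, A x -> derivable (Dseq t (F j)) x (delta_mx 0 i)) ->
  forall s, (size s < q)%N -> forall i x, A x ->
  derivable (Dseq s (fun z => \sum_(j < N) c j * F j z)) x (delta_mx 0 i).
Proof.
move=> HF s Hs i x Ax.
have Hn : {near x, (fun z => \sum_(j < N) c j * Dseq s (F j) z) =1
   Dseq s (fun z => \sum_(j < N) c j * F j z)}.
  by near=> z; rewrite (Dseq_sum c HF) //; [exact: ltnW|near: z; exact: Aop].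
apply: (near_eq_derivable Hn).
have Hd : is_derive x (delta_mx 0 i) (fun z => \sum_(j < N) c j * Dseq s (F j) z)
   (\sum_(j < N) c j * 'D_(delta_mx 0 i) (Dseq s (F j)) x).
  apply: is_derive_lsum => j.
  have d1 := derivableP (HF j _ Hs i x Ax).
  rewrite /=; have -> : (fun z => c j * Dseq s (F j) z) = c j *: Dseq s (F j) by [].
  exact: (is_deriveZ (c j) d1).
exact: (@ex_derive _ _ _ _ _ _ _ Hd).
Unshelve. all: by end_near.
Qed.

Definition Dsum N (c : 'I_N -> R) (D : 'I_N -> seq 'I_n -> 'rV[R]_n -> R) s z :=
  \sum_(j < N) c j * D j s z.

Lemma CqF_sum N (c : 'I_N -> R) (F : 'I_N -> 'rV[R]_n -> R) D :
  (forall j, CqF (F j) (D j)) ->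
  CqF (fun z => \sum_(j < N) c j * F j z) (Dsum c D).
Proof.
move=> H; split.
- apply: wc_lsum => j; apply: wc_mul; first exact: wc_cst. by case: (H j).
- move=> s Hs; apply: wc_lsum => j; apply: wc_mul; first exact: wc_cst.
  by case: (H j) => _ + _ _; apply.
- move=> s Hs x Ax; rewrite (Dseq_sum c) //; first by apply: eq_bigr => j _; case: (H j) => _ _ -> //.
  by move=> j; case: (H j).
- apply: Dseq_sum_der => j; by case: (H j).
Qed.

End CqFsec.

Set Implicit Arguments. Unset Strict Implicit. Unset Printing Implicit Defensive.

Section Norms.
Context {R : realType}.

Lemma mxnorm_le m n (x : 'M[R]_(m, n)) (M : R) : 0 <= M ->
  (forall i j, `|x i j| <= M) -> `|x| <= M.
Proof.
move=> M0 H; rewrite (_ : `|x| = mx_norm x) // mx_normrE.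
elim/big_ind: _ => //; first by move=> a b Ha Hb; rewrite ge_max Ha Hb.
Qed.

Lemma mxnorm_entry m n (x : 'M[R]_(m, n)) i j : `|x i j| <= `|x|.
Proof.
rewrite (_ : `|x| = mx_norm x) // mx_normrE.
have := @le_bigmax _ _ _ 0 (fun ij : 'I_m * 'I_n => `|x ij.1 ij.2|) (i, j).
by [].
Qed.

Lemma row_mx_norm_le n1 n2 (a : 'rV[R]_n1) (b : 'rV[R]_n2) (M : R) : 0 <= M ->
  `|a| <= M -> `|b| <= M -> `|row_mx a b| <= M.
Proof.
move=> M0 Ha Hb; apply: mxnorm_le => // i j; rewrite mxE.
case: splitP => k _; [exact: le_trans (mxnorm_entry _ _ _) Ha|
  exact: le_trans (mxnorm_entry _ _ _) Hb].
Qed.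

Lemma lsub_norm_le n1 n2 (z : 'rV[R]_(n1 + n2)) : `|lsubmx z| <= `|z|.
Proof. by apply: mxnorm_le => // i j; rewrite mxE; exact: mxnorm_entry. Qed.

Lemma rsub_norm_le n1 n2 (z : 'rV[R]_(n1 + n2)) : `|rsubmx z| <= `|z|.
Proof. by apply: mxnorm_le => // i j; rewrite mxE; exact: mxnorm_entry. Qed.

Lemma bounded_ex n (A : set 'rV[R]_n) : bounded_set A -> exists M, 0 <= M /\ forall x, A x -> `|x| <= M.
Proof.
move=> H; have H' : \forall M \near +oo, (forall x, A x -> `|x| <= M) := H.
have [M HM] := filter_ex (filterI H' (nbhs_pinfty_ge (num_real (0:R)))).
by exists M; case: HM => H1 H2; split.
Qed.

Lemma bounded_of n (A : set 'rV[R]_n) M : (forall x, A x -> `|x| <= M) -> bounded_set A.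
Proof.
move=> H; rewrite /= /bounded_near; near=> M'.
move=> x Ax; apply: le_trans (H x Ax) _; near: M'; apply: nbhs_pinfty_ge.
exact: num_real.
Unshelve. all: by end_near.
Qed.

Lemma closure_bounded n (A : set 'rV[R]_n) : bounded_set A -> bounded_set (closure A).
Proof.
move=> /bounded_ex [M [M0 HM]]; apply: (@bounded_of _ _ (M + 1)) => x Cx.
have [a [Aa xa]] := Cx _ (nbhsx_ballx x 1 ltr01).
have := HM a Aa; move: xa; rewrite -ball_normE /ball_ /= => xa Ha.
have -> : x = a + (x - a) by rewrite addrC subrK.
apply: le_trans (ler_normD _ _) _; apply: lerD => //.
exact: ltW.
Qed.

Lemma closure_compact n (A : set 'rV[R]_n) : bounded_set A -> compact (closure A).
Proof.
by move=> H; apply: bounded_closed_compact; [exact: closure_bounded|exact: closed_closure].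
Qed.

Lemma cont_bound n (A : set 'rV[R]_n) (g : 'rV[R]_n -> R) : bounded_set A ->
  {within closure A, continuous g} -> exists M, 0 <= M /\ forall x, closure A x -> `|g x| <= M.
Proof.
move=> Ab Hg; have Hc := continuous_compact Hg (closure_compact Ab).
have Hb := compact_bounded Hc.
have H' : \forall M \near +oo, (forall y, (g @` closure A) y -> `|y| <= M) := Hb.
have [M [HM M0]] := filter_ex (filterI H' (nbhs_pinfty_ge (num_real (0:R)))).
exists M; split => // x Cx; apply: HM; by exists x.
Qed.

End Norms.

Section Sups.
Context {R : realType}.

Lemma sup_abs_ge0 (T : Type) (A : set T) (g : T -> R) : 0 <= sup [set `|g x| | x in A].
Proof.
case: (pselect (has_sup [set `|g x| | x in A])) => [hs|nhs]; last by rewrite sup_out.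
case: (hs) => [[e [x Ax He]]] _.
apply: le_trans (normr_ge0 (g x)) _; apply: sup_upper_bound => //; by exists x.
Qed.

Lemma sup_abs_le (T : Type) (A : set T) (g : T -> R) c : 0 <= c ->
  (forall x, A x -> `|g x| <= c) -> sup [set `|g x| | x in A] <= c.
Proof.
move=> c0 H; have [->|ne] := eqVneq A set0.
  by rewrite image_set0 sup0.
apply: ge_sup; first by have /set0P [x Ax] := ne; exists `|g x|, x.
by move=> _ [x Ax <-]; exact: H.
Qed.

Lemma le_sup_abs (T : Type) (A : set T) (g : T -> R) M z :
  (forall x, A x -> `|g x| <= M) -> A z -> `|g z| <= sup [set `|g x| | x in A].
Proof.
move=> H Az; apply: sup_upper_bound; last by exists z.
split; first by exists `|g z|, z.
by exists M => _ [x Ax <-]; exact: H.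
Qed.

End Sups.

Section Ctsw.
Context {R : realType} {V : normedModType R}.

Definition ctsw (A : set V) (f : V -> R) := forall x, A x -> forall e : R, 0 < e ->
  exists2 del : R, 0 < del & forall z, A z -> `|x - z| < del -> `|f x - f z| < e.

Lemma ctswP (A : set V) (f : V -> R) : {within A, continuous f} <-> ctsw A f.
Proof.
rewrite subspace_continuousP; split.
- move=> H x Ax e e0.
  have := H x Ax; move/cvgrPdist_lt => /(_ e e0).
  rewrite /within /= => /nbhs_ballP [del del0 Hd].
  exists del => // z Az xz; apply: (Hd z) => //.
  by rewrite -ball_normE /ball_ /=.
- move=> H x Ax; apply/cvgrPdist_lt => e e0.
  have [del del0 Hd] := H x Ax e e0.
  rewrite /within /=; apply/nbhs_ballP; exists del => // z.
  rewrite -ball_normE /ball_ /= => xz Az; exact: Hd.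
Qed.
End Ctsw.

Set Implicit Arguments. Unset Strict Implicit. Unset Printing Implicit Defensive.

Section Mseq.
Context {R : realType} (n q : nat).

Lemma size_mseq (a : mindex n q) : size (mseq a) = mabs a.
Proof.
rewrite /mseq /mabs size_flatten /shape -map_comp sumnE big_map.
rewrite big_enum /=; apply: eq_bigr => i _ /=; by rewrite size_nseq.
Qed.

Lemma mask_nseq_cat (T : Type) (k : nat) (i : T) (y : seq T) (m : bitseq) :
  mask m (nseq k i ++ y) = nseq (count id (take k m)) i ++ mask (drop k m) y.
Proof.
elim: k m => [|k IH] [|b m] //=.
by case: b; rewrite IH.
Qed.

Lemma mask_flat (l : seq 'I_n) (c : 'I_n -> nat) (m : bitseq) : uniq l ->
  exists c' : 'I_n -> nat, (forall i, c' i <= c i)%N /\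
    mask m (flatten [seq nseq (c i) i | i <- l]) = flatten [seq nseq (c' i) i | i <- l].
Proof.
elim: l m => [|i l IH] m /=.
  by move=> _; exists c; split => //; rewrite mask0.
case/andP => il ul; rewrite mask_nseq_cat.
have [c1 [H1 H2]] := IH (drop (c i) m) ul.
exists (fun j => if j == i then count id (take (c i) m) else c1 j); split.
  move=> j; case: eqP => [->|_] //.
  by apply: leq_trans (count_size _ _) _; rewrite size_take; case: ltnP => // /ltnW.
rewrite eqxx H2; congr (_ ++ _); congr flatten; apply/eq_in_map => j jl.
by case: eqP => // ji; move: il; rewrite -ji jl.
Qed.

Lemma mask_mseq (a : mindex n q) (m : bitseq) : exists b : mindex n q, mask m (mseq a) = mseq b.
Proof.
have [c' [H1 H2]] := mask_flat (fun i => (a i : nat)) m (enum_uniq 'I_n).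
exists [ffun i => inord (c' i)]; rewrite /mseq H2; congr flatten; apply: eq_map => i.
rewrite ffunE inordK //; apply: leq_ltn_trans (H1 i) _; exact: ltn_ord.
Qed.

Lemma mfact_le (b : mindex n q) : (mfact b <= (q`!) ^ n)%N.
Proof.
rewrite /mfact (_ : (q`! ^ n = \prod_(i < n) q`!)%N); last first.
  by rewrite prod_nat_const card_ord.
by apply: leq_prod => i _; apply: leq_fact; rewrite -ltnS.
Qed.

Definition NA := \sum_(a : mindex n q | (mabs a <= q)%N) ((mfact a)%:R : R)^-1.

Lemma NA_ge0 : 0 <= NA.
Proof. by apply: sumr_ge0 => a _; rewrite invr_ge0. Qed.

Lemma Cq_norm_ge0 (A : set 'rV[R]_n) v : 0 <= Cq_norm q A v.
Proof. by apply: sumr_ge0 => a _; apply: mulr_ge0; [rewrite invr_ge0|exact: sup_abs_ge0]. Qed.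

Lemma Cq_norm_le (A : set 'rV[R]_n) v c : 0 <= c ->
  (forall a : mindex n q, (mabs a <= q)%N -> forall z, A z -> `|pderiv a v z| <= c) ->
  Cq_norm q A v <= c * NA.
Proof.
move=> c0 H; rewrite /Cq_norm /NA mulr_sumr; apply: ler_sum => a Ha.
rewrite mulrC; apply: ler_wpM2r; first by rewrite invr_ge0.
apply: sup_abs_le => // z Az; exact: H.
Qed.

Lemma pderiv_le_norm (A : set 'rV[R]_n) u (b : mindex n q) z :
  bounded_set A -> Cq q A u -> (mabs b <= q)%N -> A z ->
  `|pderiv b u z| <= (mfact b)%:R * Cq_norm q A u.
Proof.
move=> Ab [_ [_ H3]] Hb Az.
have Hs : (size (mseq b) <= q)%N by rewrite size_mseq.
have [g [gc gE]] := H3 (mseq b) Hs.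
have [M [M0 HM]] := cont_bound Ab gc.
have HS : forall x, A x -> `|pderiv b u x| <= M.
  by move=> x Ax; rewrite /pderiv -gE //; apply: HM; exact: subset_closure.
have mf0 : (0 < (mfact b)%:R :> R).
  by rewrite ltr0n /mfact; apply: prodn_gt0 => i; exact: fact_gt0.
rewrite -ler_pdivrMl // /Cq_norm (bigD1 b) //=.
apply: le_trans (_ : _ <= (mfact b)%:R^-1 * sup [set `|pderiv b u x| | x in A]) _.
  rewrite ler_pM2l ?invr_gt0 //; exact: le_sup_abs HS Az.
rewrite lerDl; apply: sumr_ge0 => a _; apply: mulr_ge0; [rewrite invr_ge0 //|exact: sup_abs_ge0].
Qed.

End Mseq.

Set Implicit Arguments. Unset Strict Implicit. Unset Printing Implicit Defensive.

Section Slice.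
Context {R : realType} (d : nat).

Lemma quot_r (H : 'rV[R]_(d + d) -> R) (x z : 'rV[R]_d) (i : 'I_d) :
  (fun h : R => h^-1 *: (((fun z => H (row_mx x z)) \o shift z) (h *: delta_mx 0 i) - H (row_mx x z)))
  = (fun h : R => h^-1 *: ((H \o shift (row_mx x z)) (h *: delta_mx 0 (rshift d i)) - H (row_mx x z))).
Proof.
apply/funext => h /=; congr (_ *: (H _ - _)).
by rewrite delta_mx_rshift scale_row_mx add_row_mx scaler0 add0r.
Qed.

Lemma quot_l (H : 'rV[R]_(d + d) -> R) (x z : 'rV[R]_d) (i : 'I_d) :
  (fun h : R => h^-1 *: (((fun z => H (row_mx z x)) \o shift z) (h *: delta_mx 0 i) - H (row_mx z x)))
  = (fun h : R => h^-1 *: ((H \o shift (row_mx z x)) (h *: delta_mx 0 (lshift d i)) - H (row_mx z x))).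
Proof.
apply/funext => h /=; congr (_ *: (H _ - _)).
by rewrite delta_mx_lshift scale_row_mx add_row_mx scaler0 add0r.
Qed.

Lemma slice_r (H : 'rV[R]_(d + d) -> R) x z i :
  derivable H (row_mx x z) (delta_mx 0 (rshift d i)) ->
  derivable (fun z => H (row_mx x z)) z (delta_mx 0 i) /\
  'D_(delta_mx 0 i) (fun z => H (row_mx x z)) z = 'D_(delta_mx 0 (rshift d i)) H (row_mx x z).
Proof. by rewrite /derivable /derive quot_r. Qed.

Lemma slice_l (H : 'rV[R]_(d + d) -> R) x z i :
  derivable H (row_mx z x) (delta_mx 0 (lshift d i)) ->
  derivable (fun z => H (row_mx z x)) z (delta_mx 0 i) /\
  'D_(delta_mx 0 i) (fun z => H (row_mx z x)) z = 'D_(delta_mx 0 (lshift d i)) H (row_mx z x).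
Proof. by rewrite /derivable /derive quot_l. Qed.

End Slice.

Section Bdry.
Context {R : realType} (d : nat) (Om : set 'rV[R]_d).
Hypothesis Oop : open Om.

Definition jc (F : 'rV[R]_d -> 'rV[R]_d -> R) := forall x z, closure Om x -> closure Om z ->
  forall e : R, 0 < e -> exists2 del : R, 0 < del & forall x' z', closure Om x' -> closure Om z' ->
  `|x - x'| < del -> `|z - z'| < del -> `|F x z - F x' z'| < e.

Lemma norm_delta (i : 'I_d) : `|delta_mx 0 i : 'rV[R]_d| = 1.
Proof.
apply/eqP; rewrite eq_le; apply/andP; split.
  apply: mxnorm_le => // a b; rewrite mxE; case: (_ && _); by rewrite ?normr1 ?normr0.
by have := mxnorm_entry (delta_mx 0 i : 'rV[R]_d) 0 i; rewrite mxE !eqxx normr1.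
Qed.

Lemma open_ball_in z : Om z -> exists2 r : R, 0 < r & forall w, `|z - w| < r -> Om w.
Proof.
move=> Oz; have := Oop Oz; move/nbhs_ballP => [r r0 Hr].
by exists r => // w zw; apply: Hr; rewrite -ball_normE /ball_ /=.
Qed.

Lemma closure_near x : closure Om x -> forall del : R, 0 < del -> exists2 x', Om x' & `|x - x'| < del.
Proof.
move=> Cx del del0; have [a [Oa xa]] := Cx _ (nbhsx_ballx x del del0).
by exists a => //; move: xa; rewrite -ball_normE /ball_ /=.
Qed.

Lemma quot_line (f : 'rV[R]_d -> R) (e z : 'rV[R]_d) (s : R) :
  (fun h : R => h^-1 *: (((fun s => f (s *: e + z)) \o shift s) (h *: 1) - f (s *: e + z)))
  = (fun h : R => h^-1 *: ((f \o shift (s *: e + z)) (h *: e) - f (s *: e + z))).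
Proof.
apply/funext => h /=; congr (_ *: (f _ - _)).
by rewrite scalerDl addrA /GRing.scale /= mulr1.
Qed.

Lemma mvt_line (f g : 'rV[R]_d -> R) (e z : 'rV[R]_d) (r : R) :
  (forall s : R, `|s| < r -> derivable f (s *: e + z) e /\ 'D_e f (s *: e + z) = g (s *: e + z)) ->
  forall t, t != 0 -> `|t| < r -> exists c : R, `|c| < `|t| /\
    f (t *: e + z) - f z = g (c *: e + z) * t.
Proof.
move=> H t t0 tr.
pose ff := fun s : R => f (s *: e + z); pose gg := fun s : R => g (s *: e + z).
have Hd : forall s : R, `|s| < r -> is_derive s 1 ff (gg s).
  move=> s sr; have [H1 H2] := H s sr.
  apply: DeriveDef; first by rewrite /derivable quot_line.
  rewrite /derive quot_line; exact: H2.
have Hab : forall a b : R, a < b -> `|a| < r -> `|b| < r ->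
    exists2 c, c \in `]a, b[%R & ff b - ff a = gg c * (b - a).
  move=> a b ab ar br; apply: MVT => //.
    move=> s; rewrite in_itv /= => /andP [aS sb]; apply: Hd.
    rewrite ltr_norml; apply/andP; split.
      by apply: lt_trans aS; move: ar; rewrite ltr_norml => /andP [].
    by apply: lt_trans sb _; move: br; rewrite ltr_norml => /andP [].
  apply: derivable_within_continuous => s; rewrite in_itv /= => /andP [aS sb].
  have : `|s| < r.
    rewrite ltr_norml; apply/andP; split.
      by apply: lt_le_trans aS; move: ar; rewrite ltr_norml => /andP [].
    by apply: le_lt_trans sb _; move: br; rewrite ltr_norml => /andP [].
  by move/Hd => /(@ex_derive _ _ _ _ _ _ _).
have ff0 : ff 0 = f z by rewrite /ff scale0r add0r.
have r0 : 0 < r by apply: le_lt_trans tr.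
have n0 : `|0:R| < r by rewrite normr0.
case: (ltgtP t 0) => [tn|tp|te]; last by rewrite te eqxx in t0.
- have [c cI Hc] := Hab t 0 tn tr n0.
  exists c; split.
    move: cI; rewrite in_itv /= => /andP [tc c0].
    by rewrite ltr0_norm // ltr0_norm // ltrN2.
  rewrite -ff0; apply/eqP; rewrite -eqr_opp opprB Hc sub0r mulrN //.
- have [c cI Hc] := Hab 0 t tp n0 tr.
  exists c; split.
    move: cI; rewrite in_itv /= => /andP [c0 ct].
    by rewrite gtr0_norm // gtr0_norm.
  by rewrite -ff0 Hc subr0.
Qed.

Lemma line_dist (z e : 'rV[R]_d) (s : R) : `|z - (s *: e + z)| = `|s| * `|e|.
Proof.
have -> : z - (s *: e + z) = - (s *: e) by rewrite opprD addrCA subrr addr0.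
by rewrite normrN normrZ.
Qed.

Lemma bdry (F Gd : 'rV[R]_d -> 'rV[R]_d -> R) (i : 'I_d) :
  jc F -> jc Gd ->
  (forall x z, Om x -> Om z -> derivable (F x) z (delta_mx 0 i) /\
      'D_(delta_mx 0 i) (F x) z = Gd x z) ->
  forall x z, closure Om x -> Om z -> derivable (F x) z (delta_mx 0 i) /\
      'D_(delta_mx 0 i) (F x) z = Gd x z.
Proof.
move=> jF jG Hint x z Cx Oz.
set e : 'rV[R]_d := delta_mx 0 i.
have ne : `|e| = 1 by rewrite norm_delta.
have [r r0 Hr] := open_ball_in Oz.
have Cz : closure Om z := subset_closure Oz.
have lineO : forall s : R, `|s| < r -> Om (s *: e + z).
  by move=> s sr; apply: Hr; rewrite line_dist ne mulr1.
have key : forall eps : R, 0 < eps -> exists2 rho : R, 0 < rho & forall t : R, t != 0 -> `|t| < rho ->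
    `|F x (t *: e + z) - F x z - t * Gd x z| <= eps * `|t|.
  move=> eps eps0; have [d1 d10 Hd1] := jG x z Cx Cz eps eps0.
  exists (Num.min d1 r); first by rewrite lt_min d10 r0.
  move=> t t0; rewrite lt_min => /andP [td1 tr].
  apply/ler_addgt0Pr => eta eta0.
  have eta2 : 0 < eta / 2 by rewrite divr_gt0.
  have Ct : closure Om (t *: e + z) by apply: subset_closure; exact: lineO.
  have [d2 d20 Hd2] := jF x (t *: e + z) Cx Ct _ eta2.
  have [d3 d30 Hd3] := jF x z Cx Cz _ eta2.
  have dm0 : 0 < Num.min d1 (Num.min d2 d3) by rewrite !lt_min d10 d20 d30.
  have [x' Ox' xx'] := closure_near Cx dm0.
  move: xx'; rewrite !lt_min => /and3P [xd1 xd2 xd3].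
  have Cx' : closure Om x' := subset_closure Ox'.
  have [c [ct Hc]] := @mvt_line (F x') (Gd x') e z r
     (fun s sr => Hint x' _ Ox' (lineO s sr)) t t0 tr.
  have cr : `|c| < r by exact: lt_trans ct tr.
  have Hg : `|Gd x z - Gd x' (c *: e + z)| < eps.
    apply: Hd1 => //; first by apply: subset_closure; exact: lineO.
    by rewrite line_dist ne mulr1; exact: lt_trans ct td1.
  have H2 : `|F x (t *: e + z) - F x' (t *: e + z)| < eta / 2.
    by apply: Hd2 => //; rewrite subrr normr0.
  have H3 : `|F x z - F x' z| < eta / 2 by apply: Hd3 => //; rewrite subrr normr0.
  have E : F x (t *: e + z) - F x z - t * Gd x z =
     (F x (t *: e + z) - F x' (t *: e + z)) - (F x z - F x' z) +
     t * (Gd x' (c *: e + z) - Gd x z).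
    have -> : t * (Gd x' (c *: e + z) - Gd x z) = (F x' (t *: e + z) - F x' z) - t * Gd x z.
      by rewrite Hc; ring.
    ring.
  rewrite E; apply: le_trans (ler_normD _ _) _.
  apply: le_trans (lerD (ler_normB _ _) (lexx _)) _.
  rewrite normrM -(distrC (Gd x z)).
  have : `|t| * `|Gd x z - Gd x' (c *: e + z)| <= `|t| * eps.
    by apply: ler_wpM2l => //; exact: ltW.
  move: H2 H3; lra.
have Hcv : (fun h : R => h^-1 *: ((F x \o shift z) (h *: e) - F x z)) @ 0^' --> Gd x z.
  apply/cvgrPdist_le => eps eps0.
  have [rho rho0 Hrho] := key eps eps0.
  near=> h.
  have h0 : h != 0 by near: h; exact: nbhs_dnbhs_neq.
  have hr : `|h| < rho by near: h; exact: dnbhs0_lt.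
  have := Hrho h h0 hr => Hk.
  rewrite /= /GRing.scale /=.
  have -> : Gd x z - h^-1 * (F x (h *: e + z) - F x z) =
     - (h^-1 * (F x (h *: e + z) - F x z - h * Gd x z)).
    by field.
  rewrite normrN normrM normrV ?unitfE //.
  by rewrite mulrC ler_pdivrMr ?normr_gt0.
split; first by apply/cvg_ex; exists (Gd x z).
exact: (cvg_lim _ Hcv).
Unshelve. all: by end_near.
Qed.

End Bdry.

Set Implicit Arguments. Unset Strict Implicit. Unset Printing Implicit Defensive.

Section Unif.
Context {R : realType}.

Lemma unif_fin (T : finType) (P : T -> R -> Prop) :
  (forall t B B', B <= B' -> P t B -> P t B') -> (forall t, exists B, P t B) ->
  exists B, 0 <= B /\ forall t, P t B.
Proof.
move=> Pm H; have [f Hf] := choice H.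
exists (\big[Num.max/0]_(t : T) f t); split.
  by elim/big_rec: _ => // a b _ Hb; rewrite le_max Hb orbT.
move=> t; apply: Pm (Hf t).
exact: (@le_bigmax _ _ _ 0 f t).
Qed.

Lemma unif_seq (m : nat) (P : seq 'I_m -> R -> Prop) :
  (forall t B B', B <= B' -> P t B -> P t B') ->
  forall Q, (forall t, (size t <= Q)%N -> exists B, P t B) ->
  exists B, 0 <= B /\ forall t, (size t <= Q)%N -> P t B.
Proof.
move=> Pm; elim=> [|Q IH] H.
  have [B HB] := H [::] (leqnn 0).
  exists (Num.max B 0); split; first by rewrite le_max lexx orbT.
  by case=> // _; apply: Pm HB; rewrite le_max lexx.
have [B1 [B10 HB1]] := IH (fun t Ht => H t (leqW Ht)).
have Ht : forall tt : Q.+1.-tuple 'I_m, exists B, P (val tt) B.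
  by move=> tt; apply: H; rewrite size_tuple.
have [B2 [B20 HB2]] := @unif_fin (Q.+1.-tuple 'I_m) (fun tt => P (val tt))
  (fun t => Pm (val t)) Ht.
exists (Num.max B1 B2); split; first by rewrite le_max B10.
move=> t; rewrite leq_eqVlt => /orP [/eqP St|St].
  have := HB2 (Tuple (introT eqP St)) => /=; apply: Pm; by rewrite le_max lexx orbT.
by apply: Pm (HB1 t St); rewrite le_max lexx.
Qed.

End Unif.

Section RowTop.
Context {R : realType} (d : nat).

Lemma row_dist (a b a' b' : 'rV[R]_d) :
  `|row_mx a b - row_mx a' b'| <= Num.max `|a - a'| `|b - b'|.
Proof.
rewrite opp_row_mx add_row_mx; apply: row_mx_norm_le.
- by rewrite le_max normr_ge0.
- by rewrite le_max lexx.
- by rewrite le_max lexx orbT.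
Qed.

Lemma row_in_P (Om : set 'rV[R]_d) x z : Om x -> Om z -> prodset Om (row_mx x z).
Proof. by move=> Ox Oz; rewrite /prodset /= row_mxKl row_mxKr. Qed.

Lemma row_closure (Om : set 'rV[R]_d) x z : closure Om x -> closure Om z ->
  closure (prodset Om) (row_mx x z).
Proof.
move=> Cx Cz B /nbhs_ballP [eps eps0 HB].
have [a Oa xa] := closure_near Cx eps0.
have [b Ob zb] := closure_near Cz eps0.
exists (row_mx a b); split; first exact: row_in_P.
apply: HB; rewrite -ball_normE /ball_ /=.
by apply: le_lt_trans (row_dist _ _ _ _) _; rewrite gt_max xa zb.
Qed.

Lemma bounded_P (Om : set 'rV[R]_d) : bounded_set Om -> bounded_set (prodset Om).
Proof.
move=> /bounded_ex [M [M0 HM]]; apply: (@bounded_of _ _ _ M) => w [H1 H2].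
rewrite -(hsubmxK w); apply: row_mx_norm_le => //; [exact: HM|exact: HM].
Qed.

End RowTop.

Section Kern.
Context {R : realType} (d q : nat) (Om : set 'rV[R]_d) (k : 'rV[R]_d -> 'rV[R]_d -> R).
Hypothesis Oop : open Om.
Hypothesis Hk : Cq q (prodset Om) (kfun2 k).
Variable G : seq 'I_(d + d) -> 'rV[R]_(d + d) -> R.
Hypothesis HG0 : G [::] = kfun2 k.
Hypothesis HGc : forall t, (size t <= q)%N -> {within closure (prodset Om), continuous (G t)}.
Hypothesis HGe : forall t, (size t <= q)%N -> forall w, prodset Om w -> G t w = Dseq t (kfun2 k) w.

Lemma jcR t : (size t <= q)%N -> jc Om (fun x z => G t (row_mx x z)).
Proof.
move=> St x z Cx Cz e e0.
have /ctswP H := HGc St.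
have [del del0 Hd] := H _ (row_closure Cx Cz) e e0.
exists del => // x' z' Cx' Cz' xx zz; apply: Hd; first exact: row_closure.
by apply: le_lt_trans (row_dist _ _ _ _) _; rewrite gt_max xx zz.
Qed.

Lemma jcL t : (size t <= q)%N -> jc Om (fun x z => G t (row_mx z x)).
Proof.
move=> St x z Cx Cz e e0.
have /ctswP H := HGc St.
have [del del0 Hd] := H _ (row_closure Cz Cx) e e0.
exists del => // x' z' Cx' Cz' xx zz; apply: Hd; first exact: row_closure.
by apply: le_lt_trans (row_dist _ _ _ _) _; rewrite gt_max xx zz.
Qed.

Lemma jc_cont (F : 'rV[R]_d -> 'rV[R]_d -> R) x : jc Om F -> closure Om x ->
  {within closure Om, continuous (F x)}.
Proof.
move=> H Cx; apply/ctswP => z Cz e e0.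
have [del del0 Hd] := H x z Cx Cz e e0.
by exists del => // z' Cz' zz; apply: Hd => //; rewrite subrr normr0.
Qed.

Lemma DR_main (s : seq 'I_d) (i : 'I_d) : (size s < q)%N -> forall x z, closure Om x -> Om z ->
  derivable (fun z => G (map (@rshift d d) s) (row_mx x z)) z (delta_mx 0 i) /\
  'D_(delta_mx 0 i) (fun z => G (map (@rshift d d) s) (row_mx x z)) z =
     G (rshift d i :: map (@rshift d d) s) (row_mx x z).
Proof.
move=> Ss.
have St : (size (map (@rshift d d) s) <= q)%N by rewrite size_map ltnW.
have St' : (size (rshift d i :: map (@rshift d d) s) <= q)%N by rewrite /= size_map.
apply: (@bdry _ _ _ Oop (fun x z => G (map (@rshift d d) s) (row_mx x z))
   (fun x z => G (rshift d i :: map (@rshift d d) s) (row_mx x z)) i (jcR St) (jcR St')).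
move=> x' z' Ox' Oz'.
have Hn : {near z', (fun w => Dseq (map (@rshift d d) s) (kfun2 k) (row_mx x' w)) =1
    (fun w => G (map (@rshift d d) s) (row_mx x' w))}.
  near=> w; rewrite HGe //; apply: row_in_P => //; near: w; exact: Oop.
have Hder : derivable (Dseq (map (@rshift d d) s) (kfun2 k)) (row_mx x' z') (delta_mx 0 (rshift d i)).
  case: Hk => _ [H2 _]; apply: H2; first by rewrite size_map.
  exact: row_in_P.
have [D1 D2] := slice_r Hder.
split; first exact: near_eq_derivable Hn D1.
rewrite -(near_eq_derive _ Hn) D2 HGe //; exact: row_in_P.
Unshelve. all: by end_near.
Qed.

Lemma DL_main (s : seq 'I_d) (i : 'I_d) : (size s < q)%N -> forall y z, closure Om y -> Om z ->
  derivable (fun z => G (map (@lshift d d) s) (row_mx z y)) z (delta_mx 0 i) /\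
  'D_(delta_mx 0 i) (fun z => G (map (@lshift d d) s) (row_mx z y)) z =
     G (lshift d i :: map (@lshift d d) s) (row_mx z y).
Proof.
move=> Ss.
have St : (size (map (@lshift d d) s) <= q)%N by rewrite size_map ltnW.
have St' : (size (lshift d i :: map (@lshift d d) s) <= q)%N by rewrite /= size_map.
apply: (@bdry _ _ _ Oop (fun y z => G (map (@lshift d d) s) (row_mx z y))
   (fun y z => G (lshift d i :: map (@lshift d d) s) (row_mx z y)) i (jcL St) (jcL St')).
move=> x' z' Ox' Oz'.
have Hn : {near z', (fun w => Dseq (map (@lshift d d) s) (kfun2 k) (row_mx w x')) =1
    (fun w => G (map (@lshift d d) s) (row_mx w x'))}.
  near=> w; rewrite HGe //; apply: row_in_P => //; near: w; exact: Oop.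
have Hder : derivable (Dseq (map (@lshift d d) s) (kfun2 k)) (row_mx z' x') (delta_mx 0 (lshift d i)).
  case: Hk => _ [H2 _]; apply: H2; first by rewrite size_map.
  exact: row_in_P.
have [D1 D2] := slice_l Hder.
split; first exact: near_eq_derivable Hn D1.
rewrite -(near_eq_derive _ Hn) D2 HGe //; exact: row_in_P.
Unshelve. all: by end_near.
Qed.

Definition DR (x : 'rV[R]_d) (s : seq 'I_d) (z : 'rV[R]_d) := G (map (@rshift d d) s) (row_mx x z).
Definition DL (y : 'rV[R]_d) (s : seq 'I_d) (z : 'rV[R]_d) := G (map (@lshift d d) s) (row_mx z y).

Lemma Dseq_R x : closure Om x -> forall s, (size s <= q)%N -> forall z, Om z ->
  Dseq s (k x) z = DR x s z.
Proof.
move=> Cx; elim=> [|i s IH] Ss z Oz.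
  by rewrite /DR /= HG0 /kfun2 row_mxKl row_mxKr.
have Ss' : (size s < q)%N by [].
have Hn : {near z, Dseq s (k x) =1 (fun w => G (map (@rshift d d) s) (row_mx x w))}.
  near=> w; rewrite IH //; [exact: ltnW|near: w; exact: Oop].
rewrite /= {1}/pdiff (near_eq_derive _ Hn).
by have [_ ->] := DR_main i Ss' Cx Oz.
Unshelve. all: by end_near.
Qed.

Lemma Dseq_L y : closure Om y -> forall s, (size s <= q)%N -> forall z, Om z ->
  Dseq s (fun z => k z y) z = DL y s z.
Proof.
move=> Cy; elim=> [|i s IH] Ss z Oz.
  by rewrite /DL /= HG0 /kfun2 row_mxKl row_mxKr.
have Ss' : (size s < q)%N by [].
have Hn : {near z, Dseq s (fun z => k z y) =1 (fun w => G (map (@lshift d d) s) (row_mx w y))}.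
  near=> w; rewrite IH //; [exact: ltnW|near: w; exact: Oop].
rewrite /= {1}/pdiff (near_eq_derive _ Hn).
by have [_ ->] := DL_main i Ss' Cy Oz.
Unshelve. all: by end_near.
Qed.

Lemma CqF_R x : closure Om x -> CqF q Om (k x) (DR x).
Proof.
move=> Cx; split.
- have -> : k x = (fun z => G [::] (row_mx x z)).
    by apply/funext => z; rewrite HG0 /kfun2 row_mxKl row_mxKr.
  exact: (jc_cont (@jcR [::] (leq0n q)) Cx).
- move=> s Ss; have St : (size (map (@rshift d d) s) <= q)%N by rewrite size_map.
  exact: (jc_cont (jcR St) Cx).
- by move=> s Ss z Oz; apply: Dseq_R.
- move=> s Ss i z Oz.
  have Hn : {near z, (fun w => G (map (@rshift d d) s) (row_mx x w)) =1 Dseq s (k x)}.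
    near=> w; rewrite Dseq_R //; [exact: ltnW|near: w; exact: Oop].
  apply: (near_eq_derivable Hn).
  by have [+ _] := DR_main i Ss Cx Oz.
Unshelve. all: by end_near.
Qed.

Lemma CqF_L y : closure Om y -> CqF q Om (fun z => k z y) (DL y).
Proof.
move=> Cy; split.
- have -> : (fun z => k z y) = (fun z => G [::] (row_mx z y)).
    by apply/funext => z; rewrite HG0 /kfun2 row_mxKl row_mxKr.
  exact: (jc_cont (@jcL [::] (leq0n q)) Cy).
- move=> s Ss; have St : (size (map (@lshift d d) s) <= q)%N by rewrite size_map.
  exact: (jc_cont (jcL St) Cy).
- by move=> s Ss z Oz; apply: Dseq_L.
- move=> s Ss i z Oz.
  have Hn : {near z, (fun w => G (map (@lshift d d) s) (row_mx w y)) =1 Dseq s (fun z => k z y)}.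
    near=> w; rewrite Dseq_L //; [exact: ltnW|near: w; exact: Oop].
  apply: (near_eq_derivable Hn).
  by have [+ _] := DL_main i Ss Cy Oz.
Unshelve. all: by end_near.
Qed.

End Kern.

Set Implicit Arguments. Unset Strict Implicit. Unset Printing Implicit Defensive.

Lemma size_masks n : size (masks n) = (2 ^ n)%N.
Proof. by elim: n => //= n IH; rewrite size_cat !size_map IH expnS mul2n addnn. Qed.

Section Bounds.
Context {R : realType} (n q : nat).

Lemma Dmul_bound (Df Dg : seq 'I_n -> 'rV[R]_n -> R) s z (cf cg : R) :
  0 <= cf -> 0 <= cg -> (size s <= q)%N ->
  (forall m, `|Df (mask m s) z| <= cf) -> (forall m, `|Dg (mask m s) z| <= cg) ->
  `|Dmul Df Dg s z| <= (2 ^ q)%:R * (cf * cg).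
Proof.
move=> cf0 cg0 Ss Hf Hg; rewrite /Dmul.
apply: le_trans (ler_norm_sum _ _ _) _.
apply: le_trans (_ : \sum_(m <- masks (size s)) (cf * cg) <= _).
  apply: ler_sum => m _; rewrite normrM; apply: ler_pM => //; exact: normr_ge0.
rewrite big_const_seq count_predT size_masks.
have -> : iter (2 ^ size s) (+%R (cf * cg)) 0 = (cf * cg) *+ (2 ^ size s).
  by elim: (2 ^ size s)%N => //= j ->; rewrite mulrS.
rewrite -mulr_natl; apply: ler_wpM2r; first exact: mulr_ge0.
by rewrite ler_nat leq_exp2l.
Qed.

Lemma Cq_CqF (A : set 'rV[R]_n) v : Cq q A v -> exists D, CqF q A v D.
Proof.
case=> H1 [H2 H3].
have Hex : forall s : seq 'I_n, exists g : 'rV[R]_n -> R,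
  (size s <= q)%N -> {within closure A, continuous g} /\ forall x, A x -> g x = Dseq s v x.
  move=> s; case: (leqP (size s) q) => Hs.
    by have [g [g1 g2]] := H3 s Hs; exists g.
  by exists (fun _ => 0).
have [D HD] := choice Hex.
exists D; split => //.
- by move=> s Hs; case: (HD s Hs).
- by move=> s Hs x Ax; case: (HD s Hs) => _ ->.
Qed.

End Bounds.

Unset Implicit Arguments. Unset Strict Implicit.
Unset Printing Implicit Defensive.

Section Main.
Context {R : realType} (d : nat) (Om : set 'rV[R]_d) (q : nat) (lam : R)
  (k : 'rV[R]_d -> 'rV[R]_d -> R) (N : R -> nat) (y : forall h : R, 'I_(N h) -> 'rV[R]_d)
  (w : forall h : R, 'I_(N h) -> R).
Hypothesis Oop : open Om.
Hypothesis Ob : bounded_set Om.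
Hypothesis lam0 : lam != 0.
Hypothesis Hk : Cq q (prodset Om) (kfun2 k).
Variable G : seq 'I_(d + d) -> 'rV[R]_(d + d) -> R.
Hypothesis HG0 : G [::] = kfun2 k.
Hypothesis HGc : forall t, (size t <= q)%N -> {within closure (prodset Om), continuous (G t)}.
Hypothesis HGe : forall t, (size t <= q)%N -> forall w, prodset Om w -> G t w = Dseq t (kfun2 k) w.
Variable Bk : R.
Hypothesis Bk0 : 0 <= Bk.
Hypothesis HBk : forall t, (size t <= q)%N -> forall z, closure (prodset Om) z -> `|G t z| <= Bk.
Variable CQ : R.
Hypothesis HCQ : forall h, 0 < h -> \sum_(i < N h) `|w h i| <= CQ.
Variable Cw : R.
Hypothesis HCw : forall h, 0 < h -> forall v, Cq q Om v ->
    `|integral_on Om v - \sum_(i < N h) w h i * v (y h i)| <= Cw * h ^+ q * Cq_norm q Om v.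
Hypothesis Hy : forall h, 0 < h -> forall i, closure Om (y h i).

Lemma kbound x z : closure Om x -> closure Om z -> `|k x z| <= Bk.
Proof.
move=> Cx Cz; have := HBk [::] (leq0n q) _ (row_closure Cx Cz).
by rewrite HG0 /kfun2 row_mxKl row_mxKr.
Qed.

Lemma DR_bound x s z : closure Om x -> (size s <= q)%N -> closure Om z -> `|DR G x s z| <= Bk.
Proof. by move=> Cx Ss Cz; apply: HBk; [rewrite size_map|exact: row_closure]. Qed.

Lemma DL_bound x s z : closure Om x -> (size s <= q)%N -> closure Om z -> `|DL G x s z| <= Bk.
Proof. by move=> Cx Ss Cz; apply: HBk; [rewrite size_map|exact: row_closure]. Qed.

Lemma quadK h v X : 0 < h -> Cq q Om v -> Cq_norm q Om v <= X ->
  `|integral_on Om v - \sum_(i < N h) w h i * v (y h i)| <= `|Cw| * h ^+ q * X.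
Proof.
move=> h0 Hv HX; apply: le_trans (HCw h h0 v Hv) _.
have hq : 0 <= h ^+ q by rewrite exprn_ge0 // ltW.
have n0 := Cq_norm_ge0 q Om v.
have H1 : Cw * h ^+ q * Cq_norm q Om v <= `|Cw| * h ^+ q * Cq_norm q Om v.
  by apply: ler_wpM2r => //; apply: ler_wpM2r => //; exact: ler_norm.
apply: le_trans H1 _; apply: ler_wpM2l => //; apply: mulr_ge0 => //.
Qed.

Definition A2 : R := (2 ^ q)%:R * (Bk * ((q`! ^ d)%:R)) * @NA R d q.

Lemma A2_ge0 : 0 <= A2.
Proof. by rewrite /A2; apply: mulr_ge0; [apply: mulr_ge0 => //; exact: mulr_ge0|exact: NA_ge0]. Qed.

Lemma normKu x u : closure Om x -> Cq q Om u ->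
  Cq q Om (fun z => k x z * u z) /\ Cq_norm q Om (fun z => k x z * u z) <= A2 * Cq_norm q Om u.
Proof.
move=> Cx Hu; have [Du HDu] := Cq_CqF Hu.
have HR := CqF_R Oop Hk HG0 HGc HGe Cx.
have Hm := CqF_mul Oop HR HDu.
split; first exact: CqF_Cq Hm.
have nu0 := Cq_norm_ge0 q Om u.
have -> : A2 * Cq_norm q Om u = ((2 ^ q)%:R * (Bk * ((q`! ^ d)%:R * Cq_norm q Om u))) * @NA R d q.
  by rewrite /A2; ring.
apply: Cq_norm_le.
  by apply: mulr_ge0 => //; apply: mulr_ge0 => //; apply: mulr_ge0.
move=> a Ha z Oz.
have Sa : (size (mseq a) <= q)%N by rewrite size_mseq.
case: Hm => _ _ Heq _; rewrite /pderiv Heq //.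
apply: Dmul_bound => //.
- by apply: mulr_ge0.
- move=> m; apply: DR_bound => //; last exact: subset_closure.
  exact: leq_trans (size_mask_le _ _) Sa.
- move=> m; have [b Hb] := mask_mseq a m.
  have Sb : (size (mseq b) <= q)%N by rewrite -Hb; exact: leq_trans (size_mask_le _ _) Sa.
  case: HDu => _ _ HDe _; rewrite Hb -HDe //.
  apply: le_trans (pderiv_le_norm Ob Hu _ Oz) _; first by rewrite -size_mseq.
  apply: ler_wpM2r => //; rewrite ler_nat; exact: mfact_le.
Qed.

Lemma normKphi h x (c : 'I_(N h) -> R) : 0 < h -> closure Om x ->
  Cq q Om (fun z => k x z * \sum_(j < N h) c j * k z (y h j)) /\
  Cq_norm q Om (fun z => k x z * \sum_(j < N h) c j * k z (y h j)) <=
    (2 ^ q)%:R * (Bk * ((\sum_(j < N h) `|c j|) * Bk)) * @NA R d q.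
Proof.
move=> h0 Cx.
have HL : forall j, CqF q Om (fun z => k z (y h j)) (DL G (y h j)).
  move=> j; exact: (CqF_L Oop Hk HG0 HGc HGe (Hy h h0 j)).
have Hs := CqF_sum Oop c HL.
have HR := CqF_R Oop Hk HG0 HGc HGe Cx.
have Hm := CqF_mul Oop HR Hs.
split; first exact: CqF_Cq Hm.
have sc0 : 0 <= \sum_(j < N h) `|c j| by apply: sumr_ge0 => j _.
apply: Cq_norm_le.
  by apply: mulr_ge0 => //; apply: mulr_ge0 => //; apply: mulr_ge0.
move=> a Ha z Oz.
have Sa : (size (mseq a) <= q)%N by rewrite size_mseq.
case: Hm => _ _ Heq _; rewrite /pderiv Heq //.
apply: Dmul_bound => //.
- exact: mulr_ge0.
- move=> m; apply: DR_bound => //; last exact: subset_closure.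
  exact: leq_trans (size_mask_le _ _) Sa.
- move=> m; rewrite /Dsum; apply: le_trans (ler_norm_sum _ _ _) _.
  rewrite mulr_suml; apply: ler_sum => j _; rewrite normrM; apply: ler_wpM2l => //.
  apply: DL_bound; [exact: Hy|exact: leq_trans (size_mask_le _ _) Sa|exact: subset_closure].
Qed.

Variable M : R.
Hypothesis HM0 : 0 <= M.
Hypothesis HM : forall v, {within closure Om, continuous v} ->
  supnorm Om v <= M * supnorm Om (fun x => lam * v x - Kop Om k v x).
Hypothesis CQ0 : 0 <= CQ.

Definition Lh h (v : 'I_(N h) -> R) (i : 'I_(N h)) :=
  lam * v i - \sum_(j < N h) w h j * k (y h i) (y h j) * v j.
Definition A1 := `|Cw| * ((2 ^ q)%:R * (Bk * (`|lam|^-1 * CQ * Bk)) * @NA R d q).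
Definition Sc := 2 * (M * (`|lam|^-1 * CQ * Bk) + `|lam|^-1).

Lemma A1_ge0 : 0 <= A1.
Proof.
rewrite /A1; apply: mulr_ge0 => //; apply: mulr_ge0; last exact: NA_ge0.
apply: mulr_ge0 => //; apply: mulr_ge0 => //; apply: mulr_ge0 => //.
by apply: mulr_ge0 => //; rewrite invr_ge0.
Qed.

Lemma Sc_ge0 : 0 <= Sc.
Proof.
rewrite /Sc; apply: mulr_ge0 => //; apply: addr_ge0; last by rewrite invr_ge0.
by apply: mulr_ge0 => //; apply: mulr_ge0 => //; apply: mulr_ge0 => //; rewrite invr_ge0.
Qed.

Lemma stab h : 0 < h -> M * A1 * h ^+ q <= 1 / 2 ->
  forall (eps : 'I_(N h) -> R) T, 0 <= T -> (forall i, `|Lh h eps i| <= T) ->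
  forall i, `|eps i| <= Sc * T.
Proof.
move=> h0 hs eps T T0 HT.
pose E := \big[Num.max/0]_(i < N h) `|eps i|.
have E0 : 0 <= E by rewrite /E; elim/big_rec: _ => // a b _ Hb; rewrite le_max Hb orbT.
have HE : forall i, `|eps i| <= E by move=> i; exact: (@le_bigmax _ _ _ 0 (fun i => `|eps i|) i).
suff : E <= Sc * T by move=> H i; exact: le_trans (HE i) H.
have li0 : 0 <= `|lam|^-1 by rewrite invr_ge0.
pose c := fun j => lam^-1 * w h j * eps j.
pose phi := fun z => \sum_(j < N h) c j * k z (y h j).
have sc : \sum_(j < N h) `|c j| <= `|lam|^-1 * CQ * E.
  apply: le_trans (_ : _ <= \sum_(j < N h) `|lam|^-1 * E * `|w h j|) _.
    apply: ler_sum => j _; rewrite /c !normrM normrV ?unitfE //.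
    rewrite (mulrC _ E) -mulrA mulrC -mulrA; apply: ler_wpM2l => //.
    by rewrite mulrC; apply: ler_wpM2r => //.
  rewrite -mulr_sumr -[_ * CQ * E]mulrA [CQ * E]mulrC mulrA.
  by apply: ler_wpM2l; [exact: mulr_ge0|exact: HCQ h h0].
have phib : forall z, closure Om z -> `|phi z| <= `|lam|^-1 * CQ * E * Bk.
  move=> z Cz; apply: le_trans (ler_norm_sum _ _ _) _.
  apply: le_trans (_ : _ <= \sum_(j < N h) `|c j| * Bk) _.
    apply: ler_sum => j _; rewrite normrM; apply: ler_wpM2l => //.
    exact: kbound (Hy h h0 j).
  by rewrite -mulr_suml; apply: ler_wpM2r.
have HL : forall j, CqF q Om (fun z => k z (y h j)) (DL G (y h j)).
  move=> j; exact: (CqF_L Oop Hk HG0 HGc HGe (Hy h h0 j)).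
have phicont : {within closure Om, continuous phi} by case: (CqF_sum Oop c HL).
have tauE : forall i, phi (y h i) = eps i - lam^-1 * Lh h eps i.
  move=> i; rewrite /phi /Lh /c.
  have -> : \sum_(j < N h) lam^-1 * w h j * eps j * k (y h i) (y h j) =
      lam^-1 * \sum_(j < N h) w h j * k (y h i) (y h j) * eps j.
    by rewrite mulr_sumr; apply: eq_bigr => j _; ring.
  by field.
pose RHS := `|lam|^-1 * CQ * Bk * T + h ^+ q * E * A1.
have RHS0 : 0 <= RHS.
  rewrite /RHS; apply: addr_ge0.
    by apply: mulr_ge0 => //; apply: mulr_ge0 => //; apply: mulr_ge0.
  apply: mulr_ge0; last exact: A1_ge0.
  by apply: mulr_ge0 => //; rewrite exprn_ge0 // ltW.
have key : forall x, closure Om x -> `|lam * phi x - Kop Om k phi x| <= RHS.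
  move=> x Cx.
  have [Hq Hn] := normKphi h x c h0 Cx.
  have Hn2 : Cq_norm q Om (fun z => k x z * phi z) <=
      (2 ^ q)%:R * (Bk * ((`|lam|^-1 * CQ * E) * Bk)) * @NA R d q.
    apply: le_trans Hn _; apply: ler_wpM2r; first exact: NA_ge0.
    apply: ler_wpM2l => //; apply: ler_wpM2l => //; exact: ler_wpM2r.
  have Hq2 := quadK h _ _ h0 Hq Hn2.
  have Iden : lam * phi x - \sum_(i < N h) w h i * (k x (y h i) * phi (y h i)) =
      lam^-1 * \sum_(i < N h) w h i * k x (y h i) * Lh h eps i.
    under [X in _ - X = _]eq_bigr => i _ do rewrite tauE.
    rewrite {1}/phi mulr_sumr.
    rewrite -sumrB mulr_sumr; apply: eq_bigr => i _; rewrite /c; by field.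
  have Ib : `|lam^-1 * \sum_(i < N h) w h i * k x (y h i) * Lh h eps i| <= `|lam|^-1 * CQ * Bk * T.
    rewrite normrM normrV ?unitfE // -!mulrA; apply: ler_wpM2l => //.
    apply: le_trans (ler_norm_sum _ _ _) _.
    apply: le_trans (_ : _ <= \sum_(i < N h) `|w h i| * (Bk * T)) _.
      apply: ler_sum => i _; rewrite !normrM -mulrA; apply: ler_wpM2l => //.
      apply: ler_pM => //; exact: kbound (Hy h h0 i).
    rewrite -mulr_suml; apply: ler_wpM2r; first exact: mulr_ge0.
    exact: HCQ h h0.
  rewrite /Kop.
  have -> : lam * phi x - integral_on Om (fun y0 => k x y0 * phi y0) =
    (lam * phi x - \sum_(i < N h) w h i * (k x (y h i) * phi (y h i))) -
    (integral_on Om (fun y0 => k x y0 * phi y0) - \sum_(i < N h) w h i * (k x (y h i) * phi (y h i))).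
    by ring.
  apply: le_trans (ler_normB _ _) _; rewrite Iden /RHS; apply: lerD => //.
  apply: le_trans Hq2 _; rewrite le_eqVlt; apply/orP; left; apply/eqP.
  rewrite /A1; ring.
have supb : supnorm Om (fun x => lam * phi x - Kop Om k phi x) <= RHS.
  by apply: sup_abs_le => // x Cx; exact: key.
have supphi : supnorm Om phi <= M * RHS.
  by apply: le_trans (HM phi phicont) _; apply: ler_wpM2l.
have epsb : forall i, `|eps i| <= M * RHS + `|lam|^-1 * T.
  move=> i; have -> : eps i = phi (y h i) + lam^-1 * Lh h eps i by rewrite tauE; ring.
  apply: le_trans (ler_normD _ _) _; apply: lerD.
    apply: le_trans supphi; apply: (le_sup_abs phib); exact: Hy.
  by rewrite normrM normrV ?unitfE //; apply: ler_wpM2l.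
have EB : E <= M * RHS + `|lam|^-1 * T.
  have R0 : 0 <= M * RHS + `|lam|^-1 * T by apply: addr_ge0; apply: mulr_ge0.
  rewrite /E; elim/big_ind: _ => //; by move=> a b Ha Hb; rewrite ge_max Ha Hb.
have P1 : M * (h ^+ q * E * A1) <= E / 2.
  have -> : M * (h ^+ q * E * A1) = (M * A1 * h ^+ q) * E by ring.
  apply: le_trans (ler_wpM2r E0 hs) _; rewrite mul1r mulrC //.
move: EB; rewrite /RHS /Sc mulrDr; move: P1; lra.
Qed.

End Main.

Unset Printing Implicit Defensive.

Section Mx.
Context {R : realType}.

Lemma sys_mul m (lam : R) (Km : 'M[R]_m) (wr : 'rV[R]_m) (e : 'cV[R]_m) i :
  ((lam%:M - Km *m diag_mx wr) *m e) i 0 = lam * e i 0 - \sum_j wr 0 j * Km i j * e j 0.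
Proof.
rewrite mulmxBl mul_scalar_mx mul_mx_diag !mxE; congr (_ - _).
by apply: eq_bigr => j _; rewrite !mxE (mulrC (Km i j)).
Qed.

Lemma sys_entry m (lam : R) (Km : 'M[R]_m) (wr : 'rV[R]_m) i j :
  (lam%:M - Km *m diag_mx wr) i j = lam * (i == j)%:R - Km i j * wr 0 j.
Proof. by rewrite mul_mx_diag !mxE mulr_natr. Qed.

Lemma mxinf_ge0 m (A : 'M[R]_m) : 0 <= mxnorm_inf A.
Proof. by rewrite /mxnorm_inf; elim/big_rec: _ => // a b _ Hb; rewrite le_max Hb orbT. Qed.

Lemma mxinf_le m (A : 'M[R]_m) c : 0 <= c -> (forall i, \sum_j `|A i j| <= c) -> mxnorm_inf A <= c.
Proof.
move=> c0 H; rewrite /mxnorm_inf; elim/big_ind: _ => //.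
  by move=> a b Ha Hb; rewrite ge_max Ha Hb.
Qed.

Lemma unit_inj m (A : 'M[R]_m) : (forall e : 'cV[R]_m, A *m e = 0 -> e = 0) -> A \in unitmx.
Proof.
move=> H; rewrite unitmxE unitfE -det_tr; apply/negP => /det0P [v v0 Hv].
have : A *m v^T = 0.
  by apply: trmx_inj; rewrite trmx_mul trmxK trmx0.
move/H => vT0; move/eqP: v0; apply; by rewrite -(trmxK v) vT0 trmx0.
Qed.

End Mx.

Theorem proposition3p3 (R : realType) (d : nat) (Om : set 'rV[R]_d) (q : nat)
  (lam : R) (k : 'rV[R]_d -> 'rV[R]_d -> R)
  (N : R -> nat) (y : forall h : R, 'I_(N h) -> 'rV[R]_d)
  (w : forall h : R, 'I_(N h) -> R) :
  open Om -> bounded_set Om -> (1 <= q)%N -> lam != 0 ->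
  Cq q (prodset Om) (kfun2 k) ->
  not_in_spectrum Om k lam ->
  quad_scheme Om y -> quad_order Om q y w -> quad_stable w ->
  exists h0 : R, 0 < h0 /\ exists kappa : R, exists C : R, 0 < C /\
    forall h : R, 0 < h < h0 ->
      sysmx k lam y w h \in unitmx /\
      cond_inf (sysmx k lam y w h) <= kappa /\
      forall f u : 'rV[R]_d -> R,
        Cq q Om f -> (exists x, closure Om x /\ f x != 0) ->
        Cq q Om u -> (forall x, closure Om x -> lam * u x - Kop Om k u x = f x) ->
        (exists! uh : 'I_(N h) -> R, forall i : 'I_(N h),
            lam * uh i - \sum_(j < N h) w h j * k (y h i) (y h j) * uh j = f (y h i)) /\
        (forall uh : 'I_(N h) -> R,
          (forall i : 'I_(N h),
            lam * uh i - \sum_(j < N h) w h j * k (y h i) (y h j) * uh j = f (y h i)) ->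
          supnorm Om (fun x => u x - nystrom k lam y w f uh x)
            <= C * h ^+ q * Cq_norm q Om u).
Proof.
move=> Oop Ob q1 lam0 Hk Hsp Hqs Hqo Hst.
have [Hk1 [Hk2 Hk3]] := Hk.
have Hex : forall t : seq 'I_(d + d), exists g : 'rV[R]_(d + d) -> R,
    (size t <= q)%N -> {within closure (prodset Om), continuous g} /\
      forall w, prodset Om w -> g w = Dseq t (kfun2 k) w.
  move=> t; case: (leqP (size t) q) => Ht; last by exists (fun _ => 0).
  by have [g [g1 g2]] := Hk3 t Ht; exists g => _; split => // w0 Pw; rewrite g2.
have [g Hg] := choice Hex.
pose G := fun t : seq 'I_(d + d) => if t is [::] then kfun2 k else g t.
have HG0 : G [::] = kfun2 k by [].
have HGc : forall t, (size t <= q)%N -> {within closure (prodset Om), continuous (G t)}.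
  by case=> [|a t] Ht //=; case: (Hg (a :: t) Ht).
have HGe : forall t, (size t <= q)%N -> forall w, prodset Om w -> G t w = Dseq t (kfun2 k) w.
  by case=> [|a t] Ht w0 Pw //=; case: (Hg (a :: t) Ht) => _ ->.
have [Bk [Bk0 HBk]] : exists Bk, 0 <= Bk /\ forall t, (size t <= q)%N ->
    forall z, closure (prodset Om) z -> `|G t z| <= Bk.
  apply: (unif_seq (P := fun t B => forall z, closure (prodset Om) z -> `|G t z| <= B)).
    by move=> t B B' BB H z Cz; apply: le_trans (H z Cz) BB.
  by move=> t Ht; have [B [_ HB]] := cont_bound (bounded_P Ob) (HGc t Ht); exists B.
case: Hst => CQ HCQ.
have CQ0 : 0 <= CQ by apply: le_trans (HCQ 1 ltr01); apply: sumr_ge0.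
case: Hqo => Cw HCw.
case: Hsp => _ [_ [M0 HM0']].
pose M := Num.max M0 0.
have HM0 : 0 <= M by rewrite le_max lexx orbT.
have HM : forall v, {within closure Om, continuous v} ->
    supnorm Om v <= M * supnorm Om (fun x => lam * v x - Kop Om k v x).
  move=> v vc; apply: le_trans (HM0' v vc) _; apply: ler_wpM2r; first exact: sup_abs_ge0.
  by rewrite le_max lexx.
case: Hqs => Hy _.
pose A1c := A1 d q lam Bk CQ Cw.
pose S := Sc lam Bk CQ M.
have A10 : 0 <= A1c := A1_ge0 d q lam Bk Bk0 CQ Cw CQ0.
have S0 : 0 <= S := Sc_ge0 lam Bk Bk0 CQ M HM0 CQ0.
have MA0 : 0 <= M * A1c by apply: mulr_ge0.
pose h0 := Num.min 1 (1 / (2 * (M * A1c) + 1)).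
have den0 : 0 < 2 * (M * A1c) + 1 by apply: ltr_pwDr => //; apply: mulr_ge0.
exists h0; split.
  by rewrite lt_min ltr01 /= divr_gt0.
exists ((`|lam| + CQ * Bk) * S).
have A20 := A2_ge0 d q Bk Bk0.
exists (`|lam|^-1 * (1 + CQ * Bk * S) * (`|Cw| * A2 d q Bk) + 1); split.
  apply: ltr_pwDr => //; apply: mulr_ge0; last by apply: mulr_ge0.
  apply: mulr_ge0; first by rewrite invr_ge0.
  by apply: addr_ge0 => //; apply: mulr_ge0 => //; apply: mulr_ge0.
move=> h /andP [hpos hlt].
have hs : M * A1c * h ^+ q <= 1 / 2.
  move: hlt; rewrite lt_min => /andP [h1 h2].
  have hq : h ^+ q <= h.
    rewrite -(subnK q1) exprD expr1; apply: ler_piMl; first exact: ltW.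
    by apply: exprn_ile1; [exact: ltW|exact: ltW].
  apply: le_trans (_ : _ <= M * A1c * h) _; first by apply: ler_wpM2l.
  apply: le_trans (_ : _ <= M * A1c * (1 / (2 * (M * A1c) + 1))) _.
    by apply: ler_wpM2l => //; exact: ltW.
  rewrite mul1r -/(_ / _) ler_pdivrMr //; lra.
have STAB := @stab R d Om q lam k N y w Oop lam0 Hk G HG0 HGc HGe Bk Bk0 HBk CQ HCQ Cw HCw Hy
  M HM0 HM CQ0 h hpos hs.
pose A := sysmx k lam y w h.
have AE : forall (e : 'cV[R]_(N h)) i, (A *m e) i 0 = Lh d lam k N y w h (fun j => e j 0) i.
  move=> e i; rewrite /A /sysmx sys_mul /Lh; congr (_ - _).
  by apply: eq_bigr => j _; rewrite !mxE.
have Ainj : forall e : 'cV[R]_(N h), A *m e = 0 -> e = 0.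
  move=> e He; apply/matrixP => i j; rewrite (ord1 j) mxE; apply/normr0_eq0/eqP.
  rewrite eq_le normr_ge0 andbT.
  have := STAB (fun j => e j 0) 0 (lexx 0) _ i; rewrite mulr0; apply.
  by move=> i'; rewrite -AE He mxE normr0.
have Aunit : A \in unitmx := unit_inj _ _ Ainj.
split; first exact: Aunit.
split.
  rewrite /cond_inf; apply: ler_pM; [exact: mxinf_ge0|exact: mxinf_ge0| |].
  - apply: mxinf_le; first by apply: addr_ge0 => //; apply: mulr_ge0.
    move=> i; rewrite /A /sysmx.
    apply: le_trans (_ : _ <= \sum_j (`|lam| * (i == j)%:R + Bk * `|w h j|)) _.
      apply: ler_sum => j _; rewrite sys_entry; apply: le_trans (ler_normB _ _) _.
      apply: lerD; first by rewrite normrM normr_nat.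
      rewrite !mxE normrM; apply: ler_wpM2r => //.
      by apply: (kbound d Om q k G HG0 Bk HBk); exact: Hy.
    rewrite big_split /= -mulr_sumr -mulr_sumr (bigD1 i) //= eqxx big1 ?addr0 ?mulr1.
      by rewrite mulrC; apply: lerD => //; apply: ler_wpM2r => //; exact: HCQ h hpos.
    by move=> j /negbTE; rewrite eq_sym => ->.
  - apply: mxinf_le => // i.
    pose B := invmx A.
    pose sig : 'cV[R]_(N h) := \col_j Num.sg (B i j).
    have He : A *m (B *m sig) = sig by rewrite mulmxA mulmxV // mul1mx.
    have Hb := STAB (fun j => (B *m sig) j 0) 1 ler01.
    have : `|(B *m sig) i 0| <= S * 1.
      apply: Hb => i'; rewrite -AE He mxE normr_sg.
      by case: (_ != 0).
    rewrite mulr1; apply: le_trans; rewrite mxE.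
    apply: le_trans (ler_norm _); rewrite le_eqVlt; apply/orP; left; apply/eqP.
    by apply: eq_bigr => j _; rewrite mxE normrEsg mulrC.
have Lsub : forall a b : 'I_(N h) -> R, forall i,
    Lh d lam k N y w h (fun j => a j - b j) i = Lh d lam k N y w h a i - Lh d lam k N y w h b i.
  move=> a b i; rewrite /Lh.
  have -> : \sum_(j < N h) w h j * k (y h i) (y h j) * (a j - b j) =
    \sum_(j < N h) w h j * k (y h i) (y h j) * a j - \sum_(j < N h) w h j * k (y h i) (y h j) * b j.
    by rewrite -sumrB; apply: eq_bigr => j _; ring.
  ring.
move=> f u Hf _ Hu Heq.
split.
  pose Fc : 'cV[R]_(N h) := \col_i f (y h i).
  pose uh := fun i => (invmx A *m Fc) i 0.
  exists uh; split.
    move=> i; have := AE (invmx A *m Fc) i.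
    by rewrite mulmxA mulmxV // mul1mx /Fc mxE => ->.
  move=> uh' Huh'; apply/funext => i.
  have Huh : forall i, Lh d lam k N y w h uh i = f (y h i).
    move=> i'; have := AE (invmx A *m Fc) i'.
    by rewrite mulmxA mulmxV // mul1mx /Fc mxE => ->.
  apply/eqP; rewrite -subr_eq0 -normr_le0.
  have := STAB (fun j => uh j - uh' j) 0 (lexx 0) _ i; rewrite mulr0; apply.
  by move=> i'; rewrite Lsub Huh /Lh Huh' subrr normr0.
move=> uh Huh.
pose eps := fun i => u (y h i) - uh i.
have nu0 := Cq_norm_ge0 q Om u.
have hq0 : 0 <= h ^+ q by rewrite exprn_ge0 // ltW.
pose T := `|Cw| * h ^+ q * (A2 d q Bk * Cq_norm q Om u).
have T0 : 0 <= T.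
  by apply: mulr_ge0; [apply: mulr_ge0|apply: mulr_ge0].
have quadx : forall x, closure Om x ->
    `|Kop Om k u x - \sum_(i < N h) w h i * (k x (y h i) * u (y h i))| <= T.
  move=> x Cx; have [Hq Hn] := normKu d Om q k Oop Ob Hk G HG0 HGc HGe Bk Bk0 HBk x u Cx Hu.
  rewrite /Kop; exact: (quadK d Om q N y w Cw HCw h _ _ hpos Hq Hn).
have tau : forall i, `|Lh d lam k N y w h eps i| <= T.
  move=> i; rewrite /eps Lsub.
  have Hi : Lh d lam k N y w h uh i = f (y h i) := Huh i.
  rewrite Hi -(Heq _ (Hy h hpos i)).
  apply: le_trans (quadx _ (Hy h hpos i)); rewrite le_eqVlt; apply/orP; left; apply/eqP.
  congr `|_|; rewrite /Lh.
  under [in RHS]eq_bigr => j _ do rewrite mulrA.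
  ring.
have epsb : forall i, `|eps i| <= S * T := STAB eps T T0 tau.
have C0 : 0 <= (`|lam|^-1 * (1 + CQ * Bk * S) * (`|Cw| * A2 d q Bk) + 1) * h ^+ q * Cq_norm q Om u.
  apply: mulr_ge0 => //; apply: mulr_ge0 => //; apply: addr_ge0 => //.
  apply: mulr_ge0; last by apply: mulr_ge0.
  apply: mulr_ge0; first by rewrite invr_ge0.
  by apply: addr_ge0 => //; apply: mulr_ge0 => //; apply: mulr_ge0.
apply: sup_abs_le => // x Cx.
have Ex : u x - nystrom k lam y w f uh x = lam^-1 *
    ((Kop Om k u x - \sum_(i < N h) w h i * (k x (y h i) * u (y h i))) +
     \sum_(i < N h) w h i * k x (y h i) * eps i).
  rewrite /nystrom -(Heq x Cx).
  have -> : \sum_(i < N h) w h i * k x (y h i) * uh i =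
      \sum_(i < N h) w h i * (k x (y h i) * u (y h i)) - \sum_(i < N h) w h i * k x (y h i) * eps i.
    by rewrite -sumrB; apply: eq_bigr => i _; rewrite /eps; ring.
  by field.
rewrite Ex normrM normrV ?unitfE //.
have Yb : `|\sum_(i < N h) w h i * k x (y h i) * eps i| <= CQ * (Bk * (S * T)).
  apply: le_trans (ler_norm_sum _ _ _) _.
  apply: le_trans (_ : _ <= \sum_(i < N h) `|w h i| * (Bk * (S * T))) _.
    apply: ler_sum => i _; rewrite !normrM -mulrA; apply: ler_wpM2l => //.
    apply: ler_pM => //.
    by apply: (kbound d Om q k G HG0 Bk HBk) => //; exact: Hy.
  rewrite -mulr_suml; apply: ler_wpM2r; last exact: HCQ h hpos.
  by apply: mulr_ge0 => //; apply: mulr_ge0.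
have li0 : 0 <= `|lam|^-1 by rewrite invr_ge0.
apply: le_trans (_ : _ <= `|lam|^-1 * (T + CQ * (Bk * (S * T)))) _.
  apply: ler_wpM2l => //; apply: le_trans (ler_normD _ _) _; apply: lerD; [exact: quadx|exact: Yb].
have -> : `|lam|^-1 * (T + CQ * (Bk * (S * T))) =
    (`|lam|^-1 * (1 + CQ * Bk * S) * (`|Cw| * A2 d q Bk)) * (h ^+ q * Cq_norm q Om u).
  by rewrite /T; ring.
rewrite -[_ * h ^+ q * _]mulrA; apply: ler_wpM2r; first exact: mulr_ge0.
by rewrite lerDl.
Qed.
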